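(* For $r\ge2$, let $H(r)$ be the graph constructed from two disjoint copies of $K_{r+2}$ by adding a matching of $r$ edges, each joining a vertex of the first copy to a vertex of the second copy. Then $\mathrm{Z}_-(H(r))=r$, $\overline{\mathrm{Z}}_-(H(r))=r+1$, and $z^-_0(H(r))=2r=\overline{\mathrm{Z}}_-(H(r))+r-1$.
   Context: All graphs are finite, simple, undirected. Skew color change rule: with $W$ the set of white (non-blue) vertices, any vertex $u$ (blue or white) may color a white vertex $w$ blue if $N(u)\cap W=\{w\}$. $S$ is a skew forcing set if starting with exactly $S$ blue and applying the rule repeatedly, all vertices become blue. $\mathrm{Z}_-(G)$ is the minimum cardinality of a skew forcing set and $\overline{\mathrm{Z}}_-(G)$ the maximum cardinality of an inclusion-minimal skew forcing set. $\mathfrak{Z}^-(G)$ has as vertices the skew forcing sets, with $S_1S_2$ an edge iff $|S_1\ominus S_2|=1$; $\mathfrak{Z}^-_k(G)$ is its subgraph induced by skew forcing sets of size at most $k$. $z^-_0(G)$ is the least $k_0$ such that $\mathfrak{Z}^-_k(G)$ is connected for all $k\ge k_0$. *)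

(* Defs.v *)
From mathcomp Require Import all_boot.
Set Implicit Arguments. Unset Strict Implicit. Unset Printing Implicit Defensive.

(* A finite simple graph is given by a vertex finType T and an adjacency
   relation e : rel T (symmetric, irreflexive for the graphs used here). *)
Section Skew.
Variables (T : finType) (e : rel T).

Definition nbhd (u : T) : {set T} := [set x | e u x].

Definition skew_step : rel {set T} := fun B B' =>
  [exists u : T, exists w : T,
     [&& w \notin B, nbhd u :&: ~: B == [set w] & B' == w |: B]].

Definition skew_forcing (S : {set T}) : bool := connect skew_step S [set: T].

(* Z_-(G): minimum cardinality of a skew forcing set (setT is one). *)
Definition Zminus : nat :=
  \big[minn/#|T|]_(S : {set T} | skew_forcing S) #|S|.

Definition Zbar_minus : nat :=
  \max_(S : {set T} | minset skew_forcing S) #|S|.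

Definition zvert (k : nat) (S : {set T}) : bool := skew_forcing S && (#|S| <= k).

Definition zadj (k : nat) : rel {set T} := fun S1 S2 =>
  [&& zvert k S1, zvert k S2 & #|(S1 :\: S2) :|: (S2 :\: S1)| == 1].

Definition zconnected (k : nat) : Prop :=
  forall S1 S2, zvert k S1 -> zvert k S2 -> connect (zadj k) S1 S2.

Definition is_z0_minus (k0 : nat) : Prop :=
  (forall k, k0 <= k -> zconnected k) /\
  (forall k1, (forall k, k1 <= k -> zconnected k) -> k0 <= k1).

End Skew.

(* H(r): two disjoint copies of K_{r+2} (vertices (false,i) and (true,i),
   i < r+2), plus the matching (false,i)--(true,i) for i < r. *)
Definition H_vert (r : nat) := (bool * 'I_r.+2)%type.
Definition H_adj (r : nat) : rel (H_vert r) := fun x y =>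
  if x.1 == y.1 then x.2 != y.2 else (x.2 == y.2) && (x.2 < r).
Arguments H_adj r : clear implicits.

(* Main.v *)
Require Import Defs.
From mathcomp Require Import all_boot zify.
Set Implicit Arguments. Unset Strict Implicit. Unset Printing Implicit Defensive.




Section Gen.
Variables (T : finType) (e : rel T).

Lemma step_mono (B B' : {set T}) u w :
  w \notin B -> nbhd e u :&: ~: B = [set w] -> B \subset B' -> w \notin B' ->
  skew_step e B' (w |: B').
Proof.
move=> wB hN sB wB'; apply/existsP; exists u; apply/existsP; exists w.
rewrite wB' eqxx andbT /=; apply/eqP/setP=> v; rewrite !inE.
have hv := hN; move/setP/(_ v): hv; rewrite !inE.
case: (v =P w) => [->|_].
  move=> _; move/setP: hN => /(_ w); rewrite !inE eqxx wB wB' /=; by case: (e u w).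
case: (e u v) => //=; apply: contraFF => vB; apply: contra vB; exact: (subsetP sB).
Qed.

Lemma forcing_mono (B B' : {set T}) :
  B \subset B' -> skew_forcing e B -> skew_forcing e B'.
Proof.
move=> sB /connectP [p hp hl]; elim: p B B' sB hp hl => [|C p IH] B B' sB /=.
  move=> _ hB; rewrite /skew_forcing.
  by have -> : B' = setT by apply/eqP; rewrite eqEsubset subsetT /= hB.
move=> /andP [hs hp] hl.
case/existsP: hs => u /existsP [w /and3P [wB /eqP hN /eqP hC]].
subst C.
case wB': (w \in B').
  apply: (IH _ _ _ hp hl); apply/subsetP=> v; rewrite !inE.
  by case/orP=> [/eqP ->|/(subsetP sB)].
have st := step_mono wB hN sB (negbT wB').
have : skew_forcing e (w |: B').
  apply: (IH _ _ _ hp hl); exact: setUS.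
by apply: connect_trans; apply: connect1.
Qed.

Lemma forcing_first (S : {set T}) : skew_forcing e S -> S != setT ->
  exists u w, nbhd e u :&: ~: S = [set w].
Proof.
case/connectP=> [[|C p]] /=; first by move=> _ ->; rewrite eqxx.
case/andP=> hs _ _ _.
case/existsP: hs => u /existsP [w /and3P [_ /eqP hN _]]; by exists u, w.
Qed.

Lemma forcing_ind (P : pred {set T}) :
  (forall X, P X -> X != setT -> exists w u, [&& w \notin X,
      nbhd e u :&: ~: X == [set w] & P (w |: X)]) ->
  forall X, P X -> skew_forcing e X.
Proof.
move=> H X; move: {2}#|~: X| (leqnn #|~: X|) => n.
elim: n X => [|n IH] X hn PX.
  have -> : X = setT.
    have h : ~: X = set0 by apply/eqP; rewrite -cards_eq0 -leqn0.
    by rewrite -[X]setCK h setC0.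
  exact: connect0.
case: (boolP (X == setT)) => [/eqP ->|nT]; first exact: connect0.
have [w [u /and3P [wX hN Pw]]] := H X PX nT.
have st : skew_step e X (w |: X).
  by apply/existsP; exists u; apply/existsP; exists w; rewrite wX hN eqxx.
apply: (connect_trans (connect1 st)); apply: IH Pw.
have : #|~: (w |: X)| < #|~: X|.
  apply: proper_card; rewrite properC; apply/properP; split.
    by apply/subsetP=> v vX; rewrite inE vX orbT.
  by exists w; rewrite ?inE ?eqxx.
move=> h; rewrite -ltnS; exact: leq_trans h hn.
Qed.

Lemma bigmin_le (P : pred {set T}) (F : {set T} -> nat) m i :
  P i -> \big[minn/m]_(j | P j) F j <= F i.
Proof.
move=> Pi; rewrite /index_enum; move: (mem_index_enum i).
rewrite /index_enum.
elim: (Finite.enum _) => [|x s IH] //=.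
rewrite inE big_cons; case: (i =P x) => [<- _|_ /= hi].
  by rewrite Pi geq_minl.
case: (P x); last exact: IH.
by rewrite geq_min IH ?orbT.
Qed.

Lemma zadj_sym k : symmetric (zadj e k).
Proof.
move=> S1 S2; rewrite /zadj andbA [zvert _ _ S1 && _]andbC -andbA; congr (_ && (_ && _)).
by rewrite setUC.
Qed.

Lemma zconnect_sym k S1 S2 : connect (zadj e k) S1 S2 = connect (zadj e k) S2 S1.
Proof. exact: (sym_connect_sym (@zadj_sym k)). Qed.

Lemma zsub_path k (S S' : {set T}) : skew_forcing e S -> S \subset S' -> #|S'| <= k ->
  connect (zadj e k) S S'.
Proof.
move: {2}#|S' :\: S| (leqnn #|S' :\: S|) => n; elim: n S => [|n IH] S hn fS sS hk.
  have -> : S = S'.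
    apply/eqP; rewrite eqEsubset sS /=; rewrite -setD_eq0 -cards_eq0 -leqn0 //.
  exact: connect0.
case: (set_0Vmem (S' :\: S)) => [h|[v]].
  have -> : S = S' by apply/eqP; rewrite eqEsubset sS /= -setD_eq0 h.
  exact: connect0.
rewrite in_setD => /andP [vS vS'].
have sv : v |: S \subset S' by rewrite subUset sub1set vS' sS.
have fv : skew_forcing e (v |: S) by apply: forcing_mono fS; exact: subsetUr.
apply: (connect_trans (y := v |: S)); last first.
  apply: IH => //; rewrite -ltnS; apply: leq_trans hn.
  apply: proper_card; apply/properP; split.
    by apply: setDS; exact: subsetUr.
  by exists v; rewrite !inE ?eqxx ?vS' ?(negbTE vS) /=.
apply: connect1; rewrite /zadj /zvert fS fv /=.
rewrite (leq_trans (subset_leq_card sS) hk) (leq_trans (subset_leq_card sv) hk) /=.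
have -> : (S :\: (v |: S)) :|: ((v |: S) :\: S) = [set v].
  apply/setP => w; rewrite !inE; case: (w =P v) => [->|] /=; first by rewrite (negbTE vS).
  by case: (w \in S).
by rewrite cards1.
Qed.

End Gen.

Section H.
Variable r : nat.
Hypothesis hr : 2 <= r.
Local Notation V := (H_vert r).
Local Notation adj := (H_adj r).
Local Notation forcing := (skew_forcing adj).

Definition side (s : bool) : {set V} := [set v : V | v.1 == s].
Definition pm (x : V) : {set V} := [set v : V | (v == (~~ x.1, x.2)) && (x.2 < r)].
Definition base2 s x y : {set V} := (side s :\: [set x; y]) :|: pm x.
Definition ordr : 'I_r.+2 := Ordinal (leqnSn r.+1).
Definition ordr1 : 'I_r.+2 := Ordinal (ltnSn r.+1).
Definition oth (i : 'I_r.+2) : 'I_r.+2 := if i == ordr then ordr1 else ordr.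

Lemma inN (u v : V) : (v \in nbhd adj u) =
  if u.1 == v.1 then u.2 != v.2 else (u.2 == v.2) && (u.2 < r).
Proof. by rewrite inE. Qed.

Lemma oth_neq i : (oth i != i).
Proof.
rewrite /oth; case: ifP => /eqP h; rewrite -val_eqE /=; apply/eqP.
  by rewrite h /=; lia.
move=> h'; apply: h; apply: val_inj => /=; lia.
Qed.

Lemma oth_ge i : r <= oth i.
Proof. by rewrite /oth; case: ifP. Qed.

Lemma oth_eq (i wi : 'I_r.+2) : r <= i -> r <= wi -> (oth wi != i) = (i == wi).
Proof.
move=> hi hw; have li := ltn_ord i; have lw := ltn_ord wi.
rewrite /oth; case: ifP; rewrite -val_eqE /= => /eqP h; rewrite -!val_eqE /=;
  case: (_ =P _) => H1; case: (_ =P _) => H2 //=; exfalso; lia.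
Qed.


Lemma notside_out s (X : {set V}) (w : V) : side s \subset X -> w \notin X -> w.1 = ~~ s.
Proof.
move=> sX wX; have : w \notin side s by apply: contra wX; exact: (subsetP sX).
by rewrite inE; case: (w.1); case: (s).
Qed.

Lemma side_forcing s : forcing (side s).
Proof.
apply: (forcing_ind (P := fun X => side s \subset X)) => // X sX nT.
case: (pickP [pred w : V | (w \notin X) && (w.2 < r)]) => [w /andP [wX wr]|hnone].
  exists w, (s, w.2); rewrite wX /=; apply/andP; split; last first.
    by apply: (subset_trans sX); apply/subsetP=> v vX; rewrite inE vX orbT.
  have hw := notside_out sX wX.
  case: w wX wr hw => wb wi /= wX wr hw; subst wb.
  apply/eqP/setP => [[b i]]; rewrite !inE /H_adj /= xpair_eqE.
  case hb: (s == b).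
    move/eqP: hb => hb; subst b.
    have -> : (s, i) \in X by apply: (subsetP sX); rewrite inE.
    by rewrite andbF; case: (s).
  have hb' : b = ~~ s by move: hb; case: b; case: (s).
  subst b; rewrite eqxx /=; case: (wi =P i) => [e|ne].
    by subst i; rewrite wr wX eqxx.
  by rewrite /=; case: (i =P wi) => // e; case: ne.
have [w wX] : exists w, w \notin X.
  apply/existsP; move: nT; apply: contraR; rewrite negb_exists => /forallP h.
  apply/eqP/setP=> v; rewrite inE; move: (h v); by rewrite negbK.
have hw := notside_out sX wX.
have wge : r <= w.2 by move: (hnone w); rewrite /= wX /= => /negbT; rewrite -leqNgt.
exists w, (~~ s, oth w.2); rewrite wX /=; apply/andP; split; last first.
  by apply: (subset_trans sX); apply/subsetP=> v vX; rewrite inE vX orbT.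
case: w wX hw wge => wb wi /= wX hw wge; subst wb.
apply/eqP/setP => [[b i]]; rewrite !inE /H_adj /= xpair_eqE.
case hb: (~~ s == b); last first.
  have -> : (b, i) \in X by apply: (subsetP sX); rewrite inE /=; move: hb; case: b; case: (s).
  by rewrite andbF; move: hb; case: b; case: (s).
move/eqP: hb => hb; subst b; rewrite eqxx /=.
case iX: ((~~ s, i) \in X); first by rewrite andbF; case: (i =P wi) => // e; subst i; rewrite iX in wX.
have ige : r <= i by move: (hnone (~~ s, i)); rewrite /= iX /= => /negbT; rewrite -leqNgt.
by rewrite andbT oth_eq.
Qed.

Lemma base1_forcing s x : x.1 = s -> forcing (side s :\ x).
Proof.
case: x => xb xi /= ->.
have st : skew_step adj (side s :\ (s, xi)) (side s).
  apply/existsP; exists (s, oth xi); apply/existsP; exists (s, xi).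
  rewrite !inE eqxx /= setD1K ?inE // eqxx andbT.
  apply/eqP/setP => [[b i]]; rewrite !inE /H_adj /= !xpair_eqE.
  case hb: (s == b).
    move/eqP: hb => hb; subst b; rewrite eqxx /= !andbT negbK.
    by case: (i =P xi) => [->|]; rewrite ?oth_neq ?andbF.
  have ge := oth_ge xi; have -> : (oth xi < r) = false by apply/negbTE; rewrite -leqNgt.
  by rewrite andbF /= eq_sym hb.
exact: connect_trans (connect1 st) (side_forcing s).
Qed.

Lemma base2_forcing s x y : x.1 = s -> y.1 = s -> x != y -> forcing (base2 s x y).
Proof.
case: x => xb xi /= ->; case: y => yb yi /= -> hxy.
have hxy' : xi != yi by move: hxy; apply: contra => /eqP ->.
have st : skew_step adj (base2 s (s, xi) (s, yi)) ((s, yi) |: base2 s (s, xi) (s, yi)).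
  apply/existsP; exists (s, xi); apply/existsP; exists (s, yi).
  rewrite eqxx andbT; apply/andP; split.
    by rewrite !inE /= !xpair_eqE !eqxx /= orbT /=; case: (s).
  apply/eqP/setP => [[b i]]; rewrite !inE /H_adj /= !xpair_eqE.
  case: b; case: s hxy => hxy; rewrite /= ?eqxx /= ?andbT ?andbF ?orbF /=;
  rewrite ?negbK; case: (xi =P i) => [<-|nx]; rewrite /= ?eqxx /= ?andbN //;
  try (have -> : (i == xi) = false by apply/eqP => e; apply: nx; rewrite e);
  rewrite ?(negbTE hxy') //.
apply: (connect_trans (connect1 st)); apply: (forcing_mono _ (base1_forcing (x := (s, xi)) erefl)).
apply/subsetP => [[b i]]; rewrite !inE /= !xpair_eqE.
case: (b =P s) => [->|] //=.
rewrite andbT => /negbTE ->; by case: (i == yi).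
Qed.

Lemma nbhd_same (u v : V) : v.1 = u.1 -> v != u -> v \in nbhd adj u.
Proof.
case: u => ub ui; case: v => vb vi /= -> h; rewrite inN /= eqxx.
by apply: contra h => /eqP ->.
Qed.

Lemma forcing_struct S : forcing S -> exists s (x : V), x.1 = s /\
  ((side s :\ x) \subset S \/ exists y, [/\ y.1 = s, x != y & base2 s x y \subset S]).
Proof.
move=> fS; case: (boolP (S == setT)) => [/eqP ->|nT].
  by exists false, (false, ord0); split => //; left; exact: subsetT.
have [u [w hN]] := forcing_first fS nT.
have key v : v \in nbhd adj u -> v != w -> v \in S.
  move=> vN vw; apply: contraR vw => vS.
  have : v \in nbhd adj u :&: ~: S by rewrite inE vN inE vS.
  by rewrite hN inE.
have wN : w \in nbhd adj u.
  have : w \in [set w] by rewrite inE.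
  by rewrite -hN inE => /andP [].
exists u.1, u; split => //.
case hw: (w.1 == u.1).
  right; exists w; split; first by apply/eqP.
    apply/negP => /eqP e; move: wN; rewrite -e inN eqxx; by case: (u.2 =P u.2).
  apply/subsetP => v; rewrite !inE => /orP [/andP [hv1 hv2]|/andP [/eqP hv hr']].
    apply: key; last by apply/negP => /eqP e; move: hv1; rewrite e eqxx orbT.
    apply: nbhd_same; first by apply/eqP.
    by apply/negP => /eqP e; move: hv1; rewrite e eqxx.
  apply: key; first by rewrite hv inN /= eqxx hr'; case: (u.1).
  apply/negP => /eqP e; move: hw; rewrite -e hv /=; by case: (u.1).
left; apply/subsetP => v; rewrite !inE => /andP [hv1 /eqP hv2].
apply: key; first exact: nbhd_same.
by apply/negP => /eqP e; move: hw; rewrite -e hv2 eqxx.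
Qed.

Lemma forcing_weak S : forcing S -> exists s (x y : V), x.1 = s /\ (side s :\ x) \subset y |: S.
Proof.
case/forcing_struct => s [x [hx [h|[y [hy hxy h]]]]].
  by exists s, x, x; split => //; apply: (subset_trans h); apply/subsetP => v vS; rewrite inE vS orbT.
exists s, x, y; split => //; apply/subsetP => v; rewrite !inE => /andP [vx vs].
case: (v =P y) => //= /eqP vy; apply: (subsetP h); by rewrite !inE (negbTE vx) (negbTE vy) vs.
Qed.

Lemma card_side s : #|side s| = r.+2.
Proof.
have -> : side s = (pair s) @: [set: 'I_r.+2].
  apply/setP => [[b i]]; rewrite inE /=; apply/idP/imsetP => [/eqP ->|[j _ [-> _]]] //.
  by exists i; rewrite ?inE.
rewrite (@card_imset _ _ (pair s)) ?cardsT ?card_ord //.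
by move=> i j [].
Qed.

Lemma card_base1 s x : x.1 = s -> #|side s :\ x| = r.+1.
Proof.
move=> hx; have := cardsD1 x (side s); rewrite card_side inE hx eqxx /=.
by move=> [].
Qed.

Lemma card_sideD2 s x y : x.1 = s -> y.1 = s -> x != y -> #|side s :\: [set x; y]| = r.
Proof.
move=> hx hy hxy.
have sub : [set x; y] \subset side s.
  by apply/subsetP => v; rewrite !inE => /orP [] /eqP ->; rewrite ?hx ?hy.
by rewrite cardsD (setIidPr sub) cards2 hxy card_side /= !subSS subn0.
Qed.

Lemma card_base2 s x y : x.1 = s -> y.1 = s -> x != y -> #|base2 s x y| <= r.+1.
Proof.
move=> hx hy hxy; apply: leq_trans (leq_card_setU _ _) _.
rewrite card_sideD2 //.
have : pm x \subset [set (~~ x.1, x.2)].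
  by apply/subsetP => v; rewrite !inE => /andP [].
move/subset_leq_card; rewrite cards1; lia.
Qed.

Lemma card_V : #|{: V}| = (2 * r).+4.
Proof. rewrite card_prod card_bool card_ord; lia. Qed.

Lemma forcing_base S : forcing S -> exists2 B : {set V}, B \subset S & forcing B /\ #|B| <= r.+1.
Proof.
case/forcing_struct => s [x [hx [h|[y [hy hxy h]]]]].
  exists (side s :\ x) => //; split; [exact: base1_forcing | by rewrite card_base1].
exists (base2 s x y) => //; split; [exact: base2_forcing | exact: card_base2].
Qed.

Lemma removable S : forcing S -> r.+2 <= #|S| -> exists2 v, v \in S & forcing (S :\ v).
Proof.
move=> fS hS; have [B sB [fB cB]] := forcing_base fS.
have : ~~ (S \subset B).
  apply/negP => /subset_leq_card h; have := leq_trans hS (leq_trans h cB); by rewrite ltnn.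
case/subsetPn => v vS vB; exists v => //.
apply: forcing_mono fB; apply/subsetP => w wB; rewrite !inE (subsetP sB w wB) andbT.
by apply/negP => /eqP e; rewrite -e wB in vB.
Qed.

Lemma reduce S : forcing S -> exists2 M : {set V}, M \subset S & forcing M /\ #|M| <= r.+1.
Proof.
move: {2}#|S| (leqnn #|S|) => n; elim: n S => [|n IH] S hn fS.
  by exists S => //; split => //; apply: leq_trans hn _.
case: (leqP #|S| r.+1) => h; first by exists S.
have [v vS fv] := removable fS h.
have : #|S :\ v| <= n by move: hn; rewrite (cardsD1 v S) vS add1n ltnS.
case/(IH _)/(_ fv) => M sM fM; exists M => //.
by apply: subset_trans sM (subsetDl _ _).
Qed.

Lemma forcing_card S : forcing S -> r <= #|S|.
Proof.
case/forcing_weak => s [x [y [hx h]]].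
have := subset_leq_card h; rewrite card_base1 // => h2.
rewrite cardsU1 in h2; move: h2; case: (y \notin S) => /=; [rewrite add1n ltnS; exact: id | rewrite add0n; exact: ltnW].
Qed.

Lemma forcing_count S : forcing S -> exists s, #|side s :\: S| <= 2.
Proof.
case/forcing_weak => s [x [y [hx h]]]; exists s.
have : side s :\: S \subset [set x; y].
  apply/subsetP => v; rewrite !inE => /andP [vS vs].
  case: (v =P x) => //= /eqP vx.
  have : v \in y |: S by apply: (subsetP h); rewrite !inE vx vs.
  by rewrite !inE (negbTE vS) orbF.
move/subset_leq_card; rewrite cards2 => h2; apply: leq_trans h2 _; by case: (x != y).
Qed.

Definition Z0 s : {set V} := base2 s (s, ordr) (s, ordr1).

Lemma ordr_neq s : ((s, ordr) : V) != (s, ordr1).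
Proof. by rewrite xpair_eqE -val_eqE /= eqxx /=; apply/eqP; lia. Qed.

Lemma Z0_forcing s : forcing (Z0 s).
Proof. exact: base2_forcing (ordr_neq s). Qed.

Lemma Z0_card s : #|Z0 s| = r.
Proof.
have -> : Z0 s = side s :\: [set (s, ordr); (s, ordr1)].
  apply/setP => v; rewrite /Z0 /base2 inE [v \in pm _]inE /= ltnn andbF orbF //.
by rewrite card_sideD2 // ordr_neq.
Qed.

Lemma Zminus_eq : Zminus adj = r.
Proof.
apply/eqP; rewrite eqn_leq; apply/andP; split.
  have := bigmin_le (fun S => #|S|) #|{: V}| (Z0_forcing false).
  by rewrite Z0_card.
rewrite /Zminus; apply: (big_ind (fun m => r <= m)).
- by rewrite card_V; lia.
- by move=> a b ha hb; rewrite leq_min ha hb.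
- by move=> S; apply: forcing_card.
Qed.

Definition o1 : 'I_r.+2 := Ordinal (erefl true : 1 < r.+2).
Definition a0 : V := (false, ord0).
Definition a1 : V := (false, o1).
Definition b0 : V := (true, ord0).
Definition E : {set V} := base2 false a0 a1.

Lemma a01 : a0 != a1.
Proof. by rewrite /a0 /a1 xpair_eqE -val_eqE. Qed.

Lemma inEE w : (w \in E) = ((w.1 == false) && (w != a0) && (w != a1)) || (w == b0).
Proof.
rewrite /E /base2 !inE /= andbC negb_or andbA.
have -> : 0 < r by lia.
by rewrite andbT.
Qed.

Lemma E_forcing : forcing E.
Proof. exact: base2_forcing a01. Qed.

Lemma E_card : r.+1 <= #|E|.
Proof.
set D := side false :\: [set a0; a1].
have sub : b0 |: D \subset E.
  apply/subsetP => w; rewrite inEE !inE => /orP [->|/andP [h ->]]; first by rewrite orbT.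
  by move: h; rewrite negb_or => /andP [-> ->].
have := subset_leq_card sub; rewrite cardsU1 card_sideD2 // ?a01 //.
by rewrite !inE /b0 /=.
Qed.

Lemma a0E : a0 \notin E.
Proof. by rewrite inEE eqxx /=. Qed.
Lemma a1E : a1 \notin E.
Proof. by rewrite inEE eqxx /=. Qed.

Lemma E_not v : v \in E -> ~~ forcing (E :\ v).
Proof.
move=> vE; apply/negP => f.
have inE' w : (w \in E :\ v) = (w != v) && (w \in E) by rewrite !inE.
have [s hs] := forcing_count f.
have ntrue : 2 < #|side true :\: (E :\ v)|.
  have sub : side true :\ b0 \subset side true :\: (E :\ v).
    apply/subsetP => w; rewrite in_setD1 => /andP [wb w1].
    rewrite in_setD inE' inEE (negbTE wb) orbF w1 andbT.
    by move: w1; rewrite inE => /eqP ->; rewrite andbF.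
  have := subset_leq_card sub; rewrite card_base1 // => h.
  by apply: leq_trans h; rewrite ltnS.
case: s hs => hs; first by move: ntrue; rewrite ltnNge hs.
move: vE; rewrite inEE => /orP [/andP [/andP [v1 va0] va1] | /eqP vb].
  have sub : a0 |: (a1 |: [set v]) \subset side false :\: (E :\ v).
    apply/subsetP => w; rewrite !inE => /or3P [] /eqP ->;
      rewrite ?eqxx ?andbF ?(negbTE a0E) ?(negbTE a1E) ?andbT //=.
  have := subset_leq_card sub; rewrite cardsU1 cardsU1 cards1.
  rewrite !inE negb_or (negbTE a01) /= (eq_sym a0) va0 (eq_sym a1) va1 /= => h.
  by move: (leq_trans h hs).
subst v.
have noT w : w \in E :\ b0 -> w.1 = false.
  rewrite inE' inEE => /andP [wb /orP [/andP [/andP [/eqP -> _] _]|]] //.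
  by rewrite (negbTE wb).
have [s' [x [hx hc]]] := forcing_struct f.
have nE0 : a0 \notin E :\ b0 by rewrite inE' (negbTE a0E) andbF.
have nE1 : a1 \notin E :\ b0 by rewrite inE' (negbTE a1E) andbF.
case: s' hx hc => hx hc.
  have [X [sX nX]] : exists X : {set V}, X \subset side true /\ (X \subset E :\ b0) && (0 < #|X|).
    case: hc => [h|[y [hy hxy h]]].
      exists (side true :\ x); split; first exact: subsetDl.
      by rewrite h card_base1.
    exists (side true :\: [set x; y]); split; first exact: subsetDl.
    rewrite card_sideD2 // ?(leq_trans _ hr) ?andbT //.
    by apply: subset_trans h; exact: subsetUl.
  case/andP: nX => sE /card_gt0P [w wX].
  have := noT w (subsetP sE w wX); have := subsetP sX w wX; rewrite inE => /eqP ->.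
  by [].
case: hc => [h|[y [hy hxy h]]].
  case: (a0 =P x) => [e|ne].
    apply: (negP nE1); apply: (subsetP h); rewrite !inE -e eq_sym (negbTE a01) /=.
    by [].
  by apply: (negP nE0); apply: (subsetP h); rewrite !inE; apply/andP; split => //; apply/eqP.
case: (ltnP x.2 r) => xr.
  have : (true, x.2) \in E :\ b0.
    apply: (subsetP h); apply/setUP; right; rewrite inE xr andbT hx.
    by [].
  by move/noT.
have xa0 : a0 != x by apply/negP => /eqP e; move: xr; rewrite -e /=; lia.
have xa1 : a1 != x by apply/negP => /eqP e; move: xr; rewrite -e /=; lia.
have ya w : w \notin E :\ b0 -> w.1 = false -> w != x -> w = y.
  move=> wE w1 wx; apply/eqP; apply: contraR wE => wy.
  by apply: (subsetP h); apply/setUP; left; rewrite !inE negb_or wx wy w1.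
have e0 := ya _ nE0 erefl xa0; have e1 := ya _ nE1 erefl xa1.
by move: a01; rewrite e0 e1 eqxx.
Qed.

Lemma E_min : minset (skew_forcing adj) E.
Proof.
apply/minsetP; split; first exact: E_forcing.
move=> B fB sB; apply/eqP; rewrite eqEsubset sB /=; apply: contraT => nsub.
case/subsetPn: nsub => v vE vB.
have := E_not vE; rewrite (forcing_mono _ fB) //.
apply/subsetP => w wB; rewrite in_setD1 (subsetP sB w wB) andbT.
by apply/negP => /eqP e; rewrite -e wB in vB.
Qed.

Lemma Zbar_eq : Zbar_minus adj = r.+1.
Proof.
apply/eqP; rewrite eqn_leq; apply/andP; split.
  apply/bigmax_leqP => S /minsetP [fS hmin]; rewrite leqNgt; apply/negP => h.
  have [v vS fv] := removable fS h.
  have := hmin _ fv (subsetDl _ _); move/setP/(_ v); by rewrite !inE eqxx vS.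
exact: leq_trans E_card (leq_bigmax_cond _ E_min).
Qed.

Lemma Z0_eq s : Z0 s = side s :\: [set (s, ordr); (s, ordr1)].
Proof.
apply/setP => v; rewrite /Z0 /base2 inE [v \in pm _]inE /= ltnn andbF orbF //.
Qed.

Definition Mid : {set V} := Z0 false :|: Z0 true.

Lemma Mid_card : #|Mid| <= 2 * r.
Proof. apply: leq_trans (leq_card_setU _ _) _; rewrite !Z0_card; lia. Qed.

Lemma side_mid k s : 2 * r <= k -> connect (zadj adj k) (side s) Mid.
Proof.
move=> hk; apply: (connect_trans (y := Z0 s)).
  rewrite zconnect_sym; apply: zsub_path; first exact: Z0_forcing.
    by rewrite Z0_eq; exact: subsetDl.
  by rewrite card_side; lia.
apply: zsub_path; first exact: Z0_forcing.
  by case: s; [exact: subsetUr | exact: subsetUl].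
exact: leq_trans Mid_card hk.
Qed.

Lemma to_mid k S : 2 * r <= k -> zvert adj k S -> connect (zadj adj k) S Mid.
Proof.
move=> hk /andP [fS cS].
have [M sM [fM cM]] := reduce fS.
apply: (connect_trans (y := M)); first by rewrite zconnect_sym; exact: zsub_path.
have [s [x [y [hx h]]]] := forcing_weak fM.
set C := side s :\ x.
have fC : forcing C by exact: base1_forcing.
have sU : M :|: C \subset y |: M.
  rewrite subUset h andbT; exact: subsetUr.
have cU : #|M :|: C| <= k.
  apply: leq_trans (subset_leq_card sU) _; rewrite cardsU1.
  have := leq_b1 (y \notin M); move: cM; set m := #|M|; set b := nat_of_bool _; lia.
apply: (connect_trans (y := M :|: C)); first by apply: zsub_path => //; exact: subsetUl.
apply: (connect_trans (y := C)); first by rewrite zconnect_sym; apply: zsub_path => //; exact: subsetUr.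
apply: (connect_trans (y := side s)); last exact: side_mid.
apply: zsub_path => //; first exact: subsetDl.
by rewrite card_side; lia.
Qed.

Lemma conn_ge k : 2 * r <= k -> zconnected adj k.
Proof.
move=> hk S1 S2 h1 h2; apply: (connect_trans (y := Mid)); first exact: to_mid.
by rewrite zconnect_sym; exact: to_mid.
Qed.

Lemma adj_Q S1 S2 : zadj adj (2 * r - 1) S1 S2 ->
  #|side false :\: S1| <= 2 -> #|side false :\: S2| <= 2.
Proof.
case/and3P => /andP [f1 c1] /andP [f2 c2] /cards1P [v hv] q1.
have same w : w != v -> (w \in S1) = (w \in S2).
  move=> wv; have : w \notin (S1 :\: S2) :|: (S2 :\: S1) by rewrite hv inE.
  by rewrite !inE; case: (w \in S1); case: (w \in S2).
have eqside s : v.1 != s -> side s :\: S1 = side s :\: S2.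
  move=> vs; apply/setP => w; rewrite !inE; case ws: (w.1 == s); rewrite ?andbF ?andbT //.
  rewrite same //; apply/negP => /eqP e; by rewrite -e ws in vs.
case hv1: (v.1).
  by rewrite -(eqside false) // hv1.
case: (leqP #|side false :\: S2| 2) => // h2; exfalso.
have [s hs] := forcing_count f2.
case: s hs => hs; last by move: (leq_trans h2 hs); rewrite ltnn.
rewrite -(eqside true) ?hv1 // in hs.
have sub : ~: S1 \subset (side false :\: S1) :|: (side true :\: S1).
  apply/subsetP => w; rewrite !inE => wS; rewrite wS /=; by case: (w.1).
have h3 := leq_trans (subset_leq_card sub) (leq_card_setU _ _).
have h4 := cardsC S1; rewrite card_V in h4.
move: c1 q1 hs h3 h4; set a := #|S1|; set b := #|~: S1|;
  set c := #|side false :\: S1|; set d := #|side true :\: S1|; lia.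
Qed.

Lemma QZ0f : #|side false :\: Z0 false| <= 2.
Proof.
have : side false :\: Z0 false \subset [set (false, ordr); (false, ordr1)].
  apply/subsetP => w; rewrite Z0_eq !inE; case: (w.1 == false); rewrite ?andbT ?andbF //.
  by rewrite negbK.
move/subset_leq_card; rewrite cards2 => h; apply: leq_trans h _; by case: (_ != _).
Qed.

Lemma QZ0t : 2 < #|side false :\: Z0 true|.
Proof.
have -> : side false :\: Z0 true = side false.
  apply/setP => w; rewrite Z0_eq !inE; case: (w.1) => //=; by rewrite andbF.
rewrite card_side; lia.
Qed.

Lemma not_conn : ~ zconnected adj (2 * r - 1).
Proof.
move=> hc.
have z s : zvert adj (2 * r - 1) (Z0 s).
  by rewrite /zvert Z0_forcing Z0_card /=; lia.
have := hc _ _ (z false) (z true).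
have cl : closed (zadj adj (2 * r - 1)) [pred S : {set V} | #|side false :\: S| <= 2].
  move=> S1 S2 h; apply/idP/idP; first exact: adj_Q.
  by apply: adj_Q; rewrite zadj_sym.
move/(closed_connect cl); rewrite !inE QZ0f.
by move/esym; rewrite leqNgt QZ0t.
Qed.

End H.

Theorem proposition5p8 (r : nat) (hr : 2 <= r) :
  [/\ Zminus (H_adj r) = r,
      Zbar_minus (H_adj r) = r.+1,
      is_z0_minus (H_adj r) (2 * r)
    & 2 * r = Zbar_minus (H_adj r) + r - 1].
Proof.
split.
- exact: Zminus_eq.
- exact: Zbar_eq.
- split; first by move=> k; exact: conn_ge.
  move=> k1 hk1; rewrite leqNgt; apply/negP => lt.
  apply: (not_conn hr); apply: hk1; lia.
- rewrite (Zbar_eq hr); lia.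
Qed.
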